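(* Let $n=p'q$ where $p',q$ are distinct primes both at least $7$, let $A=L(n;p')$, and let $S=(x_1,x_2,x_3)$ be a sequence in $\mathbb{Z}_n$. Then $S$ is an $A$-extremal sequence for the Davenport constant if $S$ is equivalent with respect to $A$ to a sequence $(y_1,y_2,y_3)$ for which one of the following holds: (i) $y_1$ is the only term divisible by $q$, $y_1\neq 0$, and the image of $(y_2,y_3)$ under the natural map $g:\mathbb{Z}_n\to\mathbb{Z}_q$ is a $Q_q$-extremal sequence for the Davenport constant; (ii) $y_1$ is the only term coprime to $p'$, and the image of $(y_2,y_3)$ under $g$ is a $Q_q$-extremal sequence for the Davenport constant in $\mathbb{Z}_q$.
   Context: $\mathbb{Z}_m$ is the integers mod $m$, $U(m)$ its unit group; for a prime $q$, $Q_q=\{x^2: x\in U(q)\}$. For nonempty $A\subseteq\mathbb{Z}_m\setminus\{0\}$, a sequence $(x_1,\ldots,x_k)$ is an $A$-weighted zero-sum sequence if $\sum a_ix_i=0$ for some $a_i\in A$; $D_A(m)$ is the least $k$ such that every length-$k$ sequence in $\mathbb{Z}_m$ has a nonempty $A$-weighted zero-sum subsequence; an $A$-extremal sequence for the Davenport constant is a sequence of length $D_A(m)-1$ with no $A$-weighted zero-sum subsequence. For a multiplicative group $A$, $(x_1,\ldots,x_k)$ and $(y_1,\ldots,y_k)$ are equivalent with respect to $A$ if there are $a_i\in A$, a unit $c$ and a permutation $\sigma$ with $y_{\sigma(i)}=c\,a_ix_i$ for all $i$. For odd $m=\prod p_i^{r_i}$, prime $p\mid m$ and $a\in U(m)$,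 $\left(\frac{a}{p}\right)$ is the Legendre symbol of the image mod $p$, $\left(\frac{a}{m}\right)=\prod\left(\frac{a}{p_i}\right)^{r_i}$, and $L(m;p')=\{a\in U(m):\left(\frac{a}{m}\right)=\left(\frac{a}{p'}\right)\}$ for a prime $p'\mid m$. *)

(* Defs.v *)
From mathcomp Require Import all_boot all_order all_algebra all_fingroup.
Set Implicit Arguments. Unset Strict Implicit. Unset Printing Implicit Defensive.
Import GRing.Theory.
Local Open Scope ring_scope.

Definition weighted_zero_sum (R : comUnitRingType) (A : {pred R}) (s : seq R) : Prop :=
  exists w : seq R,
    [/\ size w = size s, all (fun a => a \in A) w & \sum_(i < size s) w`_i * s`_i = 0].

Definition has_wzs_subseq (R : comUnitRingType) (A : {pred R}) (s : seq R) : Prop :=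
  exists t : seq R, [/\ subseq t s, t != [::] & weighted_zero_sum A t].

Definition davenport_prop (R : comUnitRingType) (A : {pred R}) (k : nat) : Prop :=
  forall s : seq R, size s = k -> has_wzs_subseq A s.

Definition is_davenport_constant (R : comUnitRingType) (A : {pred R}) (k : nat) : Prop :=
  davenport_prop A k /\ forall j, (j < k)%N -> ~ davenport_prop A j.

Definition extremal (R : comUnitRingType) (A : {pred R}) (s : seq R) : Prop :=
  exists k, [/\ is_davenport_constant A k, size s = k.-1 & ~ has_wzs_subseq A s].

Definition equiv_wrt (R : comUnitRingType) (k : nat) (A : {pred R})
    (x y : k.-tuple R) : Prop :=
  exists (a : 'I_k -> R) (c : R) (sigma : 'S_k),
    [/\ forall i, a i \in A, c \is a GRing.unit &
        forall i, tnth y (sigma i) = c * a i * tnth x i].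

Definition legendre (a p : nat) : int :=
  if (p %| a)%N then 0
  else if [exists x : 'I_p, ((x * x) %% p == a %% p)%N] then 1 else -1.

Definition jacobi (a m : nat) : int :=
  \prod_(p <- primes m) legendre a p ^+ logn p m.

Definition L_set (m p' : nat) : {pred 'Z_m} :=
  [pred a : 'Z_m | (a \is a GRing.unit) && (jacobi a m == legendre a p')].

Definition Qset (q : nat) : {pred 'Z_q} :=
  [pred y : 'Z_q | [exists x : 'Z_q, (x \is a GRing.unit) && (y == x ^+ 2)]].

Definition redmod (n q : nat) (x : 'Z_n) : 'Z_q := (x : nat)%:R.
Arguments L_set : clear implicits.
Arguments Qset : clear implicits.
Arguments redmod : clear implicits.

(* Main.v *)
Require Import Defs.
From mathcomp Require Import all_boot all_order all_algebra all_fingroup all_solvable.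
From mathcomp Require Import zify ring.
Set Implicit Arguments. Unset Strict Implicit. Unset Printing Implicit Defensive.
Import GRing.Theory.
Local Open Scope ring_scope.

Lemma Zm_lt m (x : 'Z_m) : (1 < m)%N -> (x < m)%N.
Proof. move=> m1; have h := ltn_ord x; by apply: (leq_trans h); rewrite Zp_cast. Qed.

Lemma Zm_natE m (x : 'Z_m) : (1 < m)%N -> (x : nat)%:R = x.
Proof. by move=> m1; apply: val_inj; rewrite /= val_Zp_nat // modn_small // Zm_lt. Qed.

Lemma Zm_eq0 m (x : 'Z_m) : (1 < m)%N -> (x == 0) = (m %| x)%N.
Proof.
move=> m1; apply/eqP/idP => [->|h]; first by rewrite dvdn0.
apply: val_inj => /=; move: h; rewrite /dvdn modn_small ?Zm_lt //; by move/eqP.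
Qed.

Section Red.
Variables m d : nat.
Hypothesis m1 : (1 < m)%N.
Hypothesis d1 : (1 < d)%N.
Hypothesis dm : (d %| m)%N.

Lemma red_nat k : redmod m d (k%:R) = k%:R.
Proof. by apply: val_inj; rewrite /redmod /= !val_Zp_nat // modn_dvdm. Qed.

Lemma redD x y : redmod m d (x + y) = redmod m d x + redmod m d y.
Proof. by rewrite -(Zm_natE x m1) -(Zm_natE y m1) -natrD red_nat natrD !red_nat. Qed.

Lemma redM x y : redmod m d (x * y) = redmod m d x * redmod m d y.
Proof. by rewrite -(Zm_natE x m1) -(Zm_natE y m1) -natrM red_nat natrM !red_nat. Qed.

Lemma red0 : redmod m d 0 = 0.
Proof. exact: (red_nat 0). Qed.

Lemma red1 : redmod m d 1 = 1.
Proof. exact: (red_nat 1). Qed.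

Lemma redN x : redmod m d (- x) = - redmod m d x.
Proof. by apply/eqP; rewrite -subr_eq0 opprK -redD addNr red0. Qed.

Lemma red_sum I r (P : pred I) (F : I -> 'Z_m) :
  redmod m d (\sum_(i <- r | P i) F i) = \sum_(i <- r | P i) redmod m d (F i).
Proof. exact: (big_morph _ redD red0). Qed.

Lemma red_eq0 x : (redmod m d x == 0) = (d %| x)%N.
Proof. by rewrite /redmod Zm_eq0 // val_Zp_nat // /dvdn modn_mod. Qed.

Lemma red_unit x : x \is a GRing.unit -> redmod m d x \is a GRing.unit.
Proof. by case/unitrP=> y [h _]; apply/unitrP; exists (redmod m d y); rewrite -redM h red1 mulrC -redM h red1. Qed.
End Red.

Lemma Zm_eq0_crt a b (x : 'Z_(a * b)) : (1 < a)%N -> (1 < b)%N -> coprime a b ->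
  x = 0 <-> redmod (a * b) a x = 0 /\ redmod (a * b) b x = 0.
Proof.
move=> a1 b1 cab; have m1 : (1 < a * b)%N by rewrite (leq_trans a1) // leq_pmulr // ltnW.
split=> [->|[/eqP ha /eqP hb]].
  by rewrite (red0 m1 a1 (dvdn_mulr _ (dvdnn a))) (red0 m1 b1 (dvdn_mull _ (dvdnn b))).
apply/eqP; rewrite Zm_eq0 // Gauss_dvd //.
by rewrite -(red_eq0 a1) -(red_eq0 b1) ha hb.
Qed.

Lemma crt_exists a b (al : 'Z_a) (be : 'Z_b) : (1 < a)%N -> (1 < b)%N -> coprime a b ->
  exists w : 'Z_(a * b), redmod (a * b) a w = al /\ redmod (a * b) b w = be.
Proof.
move=> a1 b1 cab; have m1 : (1 < a * b)%N by rewrite (leq_trans a1) // leq_pmulr // ltnW.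
exists (chinese a b al be)%:R; split.
- rewrite red_nat ?dvdn_mulr // -Zp_nat_mod // chinese_modl // Zp_nat_mod //.
  exact: Zm_natE.
- rewrite red_nat ?dvdn_mull // -Zp_nat_mod // chinese_modr // Zp_nat_mod //.
  exact: Zm_natE.
Qed.

Section PrimeZ.
Variable q : nat.
Hypothesis pq : prime q.

Let q1 : (1 < q)%N. Proof. exact: prime_gt1. Qed.

Lemma Zp_unitE (x : 'Z_q) : (x \is a GRing.unit) = (x != 0).
Proof. by rewrite Zm_eq0 // -[x in LHS](Zm_natE x q1) unitZpE // prime_coprime. Qed.

Lemma Zp_mul_eq0 (x y : 'Z_q) : (x * y == 0) = (x == 0) || (y == 0).
Proof.
case: (eqVneq x 0) => [->|nx]; first by rewrite mul0r eqxx.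
case: (eqVneq y 0) => [->|ny]; first by rewrite mulr0 eqxx.
by apply/negbTE; rewrite -Zp_unitE unitrMr ?Zp_unitE.
Qed.

Lemma QsetP (x : 'Z_q) : reflect (exists2 s, s \is a GRing.unit & x = s ^+ 2) (x \in Qset q).
Proof.
apply: (iffP existsP) => [[s /andP [us /eqP ->]]|[s us ->]]; first by exists s.
by exists s; rewrite us eqxx.
Qed.

Lemma Q_unit x : x \in Qset q -> x \is a GRing.unit.
Proof. by case/QsetP=> s us ->; rewrite unitrX. Qed.

Lemma Q_neq0 x : x \in Qset q -> x != 0.
Proof. by move/Q_unit; rewrite Zp_unitE. Qed.

Lemma Q_sq s : s \is a GRing.unit -> s ^+ 2 \in Qset q.
Proof. by move=> us; apply/QsetP; exists s. Qed.

Lemma Q1 : 1 \in Qset q.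
Proof. by rewrite -(expr1n _ 2); apply: Q_sq; rewrite unitr1. Qed.

Lemma QM x y : x \in Qset q -> y \in Qset q -> x * y \in Qset q.
Proof.
case/QsetP=> s us ->; case/QsetP=> t ut ->.
by rewrite -exprMn; apply: Q_sq; rewrite unitrM us.
Qed.

Lemma QV x : x \in Qset q -> x^-1 \in Qset q.
Proof. by case/QsetP=> s us ->; rewrite -exprVn; apply: Q_sq; rewrite unitrV. Qed.

Lemma Q_div x y : x \in Qset q -> x * y \in Qset q -> y \in Qset q.
Proof.
move=> Qx Qxy; have -> : y = x^-1 * (x * y) by rewrite mulrA mulVr ?mul1r // Q_unit.
by rewrite QM // QV.
Qed.

Lemma unit_sq_or_g : exists g : 'Z_q, forall x : 'Z_q, x \is a GRing.unit ->
  x \in Qset q \/ exists2 s, s \in Qset q & x = g * s.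
Proof.
have /cyclicP [g0 hg] := units_Zp_cyclic pq.
exists (val g0) => x ux.
have : FinRing.Unit ux \in <[g0]>%g by rewrite -hg inE.
case/cycleP=> k hk.
have hx : x = val g0 ^+ k by rewrite -FinRing.val_unitX -hk.
have ug : val g0 \is a GRing.unit := valP g0.
case: (boolP (odd k)) => ok.
- right; exists ((val g0 ^+ k./2) ^+ 2); first by apply: Q_sq; rewrite unitrX.
  by rewrite hx -exprM -exprS; congr (_ ^+ _); rewrite -{1}(odd_double_half k) ok muln2.
- left; rewrite hx -(odd_double_half k) (negbTE ok) add0n -muln2 exprM.
  by apply: Q_sq; rewrite unitrX.
Qed.

Lemma nonQ_mul x y : x \is a GRing.unit -> y \is a GRing.unit ->
  x \notin Qset q -> y \notin Qset q -> x * y \in Qset q.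
Proof.
move=> ux uy nx ny; have [g hg] := unit_sq_or_g.
case: (hg x ux) => [Qx|[s Qs ex]]; first by rewrite Qx in nx.
case: (hg y uy) => [Qy|[t Qt ey]]; first by rewrite Qy in ny.
rewrite ex ey mulrACA.
have Qg : g * g \in Qset q.
  apply/QsetP; exists g; last by rewrite expr2.
  by have := ux; rewrite ex unitrM => /andP [].
by rewrite QM // QM.
Qed.

Lemma keyQ (va vb vc vd : 'Z_q) : va != 0 -> vb != 0 -> vc != 0 ->
  - (va * vc) \in Qset q -> - (va * vd) \in Qset q -> - (vc * vd) \notin Qset q ->
  - (vb * vc) \in Qset q \/ - (va * vb) \in Qset q.
Proof.
move=> na nb nc hac had ncd.
have ua : va \is a GRing.unit by rewrite Zp_unitE.
have ub : vb \is a GRing.unit by rewrite Zp_unitE.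
have cd : vc * vd \in Qset q.
  apply: (Q_div (Q_sq ua)).
  have -> : va ^+ 2 * (vc * vd) = (- (va * vc)) * (- (va * vd)) by ring.
  by rewrite QM.
have m1 : -1 \notin Qset q.
  apply/negP => h; move/negP: ncd; apply.
  have -> : - (vc * vd) = -1 * (vc * vd) by ring.
  by rewrite QM.
case: (boolP (- (vb * vc) \in Qset q)) => h; [by left | right].
have nab : va * vb \notin Qset q.
  apply/negP => hab; move/negP: h; apply.
  apply: (Q_div (Q_sq ua)).
  have -> : va ^+ 2 * - (vb * vc) = (- (va * vc)) * (va * vb) by ring.
  by rewrite QM.
have -> : - (va * vb) = -1 * (va * vb) by ring.
by apply: nonQ_mul => //; rewrite ?unitrN ?unitr1 ?unitrM ?ua.
Qed.

End PrimeZ.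

Section WZS.
Variable R : comUnitRingType.
Variable A : {pred R}.

Definition wsum (w s : seq R) := \sum_(i < size s) w`_i * s`_i.

Lemma wsum_cons w x s : wsum w (x :: s) = w`_0 * x + wsum (behead w) s.
Proof. by rewrite /wsum big_ord_recl /=; congr (_ + _); apply: eq_bigr => i _; rewrite nth_behead. Qed.

Lemma wsum_nil w : wsum w [::] = 0.
Proof. by rewrite /wsum big_ord0. Qed.

Fixpoint expand (m : bitseq) (w : seq R) : seq R :=
  if m is b :: m' then
    (if b then head 0 w :: expand m' (behead w) else 0 :: expand m' w)
  else [::].

Lemma size_expand m w : size (expand m w) = size m.
Proof. by elim: m w => //= b m IH w; case: b => /=; rewrite IH. Qed.

Lemma wsum_expand m w s : size m = size s -> wsum (expand m w) s = wsum w (mask m s).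
Proof.
elim: m w s => [|b m IH] w [|x s] //=; first by rewrite !wsum_nil.
move=> [hs]; case: b => /=; rewrite !wsum_cons /= IH //.
by rewrite mul0r add0r.
Qed.

Definition AZ := fun a : R => (a \in A) || (a == 0).

Lemma all_expand m w : all AZ w -> all AZ (expand m w).
Proof.
elim: m w => //= b m IH w hw; case: b => /=.
- case: w hw => [|a w] /=.
    by move=> _; rewrite {1}/AZ eqxx orbT IH.
  by case/andP=> -> /IH ->.
- by rewrite {1}/AZ eqxx orbT IH.
Qed.

Lemma mem_expand m w y : (size w <= count id m)%N -> y \in w -> y \in expand m w.
Proof.
elim: m w => [|b m IH] w /=; first by case: w.
case: b => /= hs hy.
- case: w hs hy => // a w /= hs; rewrite !inE => /orP [->//|hy].
  by rewrite IH ?orbT.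
- by rewrite inE IH ?orbT.
Qed.

Lemma all_maskA w : all (mem A) (mask (map (mem A) w) w).
Proof. by elim: w => //= a w IH; case: (boolP (a \in A)) => ha //=; rewrite ha. Qed.

Lemma wsum_mask w s : size w = size s -> all AZ w ->
  wsum (mask (map (mem A) w) w) (mask (map (mem A) w) s) = wsum w s.
Proof.
elim: w s => [|a w IH] [|x s] //= [hs] /andP [ha hw].
case: (boolP (a \in A)) => hA /=; rewrite !wsum_cons /= IH //.
move: ha; rewrite /AZ (negbTE hA) /= => /eqP ->; by rewrite mul0r add0r.
Qed.

Definition wzseq (s : seq R) := exists w : seq R,
  [/\ size w = size s, all AZ w, has (mem A) w & wsum w s = 0].

Lemma wzseqP s : has_wzs_subseq A s <-> wzseq s.
Proof.
split.
- case=> t [/subseqP [m hm ->] tn [w' [hw' allw' sw']]].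
  exists (expand m w'); split.
  + by rewrite size_expand.
  + apply: all_expand; apply/allP => a ha; by rewrite /AZ (allP allw').
  + case: w' hw' allw' sw' => [|a w'] hw' allw' sw'.
      by move: tn; rewrite -size_eq0 -hw' eqxx.
    apply/hasP; exists a => //=; last by case/andP: allw'.
    apply: mem_expand; last by rewrite inE eqxx.
    by rewrite hw' size_mask.
  + by rewrite wsum_expand.
- case=> w [hw allw hasw sw].
  exists (mask (map (mem A) w) s); split.
  + exact: mask_subseq.
  + rewrite -size_eq0 size_mask ?size_map // count_map -lt0n -has_count.
    exact: hasw.
  + exists (mask (map (mem A) w) w); split.
    * by rewrite !size_mask ?size_map.
    * exact: all_maskA.
    * by have := wsum_mask hw allw; rewrite /wsum => ->.
Qed.

Definition wzf (s : seq R) := exists w : 'I_(size s) -> R,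
  [/\ forall i, w i \in A \/ w i = 0, exists i, w i \in A &
      \sum_i w i * s`_i = 0].

Lemma wzfP s : has_wzs_subseq A s <-> wzf s.
Proof.
split.
- case/wzseqP=> w [hw allw hasw sw]; exists (fun i => w`_i); split.
  + move=> i; have := all_nthP 0 allw; move/(_ i); rewrite hw ltn_ord => /(_ isT).
    by rewrite /AZ => /orP [->|/eqP ->]; [left|right].
  + case/(has_nthP 0): hasw => i; rewrite hw => hi hA.
    by exists (Ordinal hi).
  + exact: sw.
- case=> w [hw [i0 hi0] sw]; apply/wzseqP.
  exists [tuple w i | i < size s]; split.
  + by rewrite size_tuple.
  + apply/all_tnthP => i; rewrite tnth_mktuple /AZ.
    by case: (hw i) => [->|->]; rewrite ?eqxx ?orbT.
  + by apply/has_tnthP; exists i0; rewrite tnth_mktuple.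
  + rewrite /wsum; transitivity (\sum_i w i * s`_i); last exact: sw.
    apply: eq_bigr => i _.
    by rewrite -(tnth_nth 0 [tuple w i | i < size s] i) tnth_mktuple.
Qed.

End WZS.

Lemma legendre_nz (a p : nat) : ~~ (p %| a)%N -> legendre a p != 0.
Proof. by rewrite /legendre => /negbTE ->; case: ifP. Qed.

Lemma legendre1P (a q : nat) : prime q -> ~~ (q %| a)%N ->
  (legendre a q == 1) = ((a%:R : 'Z_q) \in Qset q).
Proof.
move=> pq nqa; have q1 := prime_gt1 pq.
rewrite /legendre (negbTE nqa).
apply/idP/idP.
- case: ifP => // /existsP [x /eqP hx] _.
  apply/QsetP; exists (x : nat)%:R.
  + rewrite -(unitrX_pos _ (isT : (0 < 2)%N)) -natrX.
    rewrite unitZpE // prime_coprime // /dvdn -modnXm.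
    by rewrite (modn_small (ltn_ord x)) expnS expn1 hx.
  + rewrite -natrX expnS expn1; apply: val_inj; rewrite /= !val_Zp_nat //.

- case/QsetP=> s us hs.
  case: ifP => // /existsP []; exists (Ordinal (Zm_lt s q1)) => /=.
  have e : (((s:nat) * s)%:R : 'Z_q) = a%:R.
    by rewrite natrM !(Zm_natE s q1) -expr2 -hs.
  by have := congr1 (@nat_of_ord _) e; rewrite !val_Zp_nat // => ->.
Qed.

Section LSet.
Variables p' q n : nat.
Hypotheses (pp : prime p') (pq : prime q) (npq : p' != q) (hn : n = (p' * q)%N).

Let p1 : (1 < p')%N. Proof. exact: prime_gt1. Qed.
Let q1 : (1 < q)%N. Proof. exact: prime_gt1. Qed.
Let n1 : (1 < n)%N. Proof. by rewrite hn (leq_trans p1) // leq_pmulr // ltnW. Qed.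

Lemma jacobiE (a : nat) : jacobi a n = legendre a p' * legendre a q.
Proof.
rewrite /jacobi.
have pe : perm_eq (primes n) [:: p'; q].
  apply: uniq_perm; first exact: primes_uniq.
    by rewrite /= inE npq.
  move=> r; rewrite mem_primes !inE hn muln_gt0 !prime_gt0 //=.
  apply/idP/idP.
  - by case/andP=> pr; rewrite Euclid_dvdM // !dvdn_prime2.
  - by case/orP=> /eqP ->; [rewrite pp dvdn_mulr | rewrite pq dvdn_mull].
rewrite (perm_big _ pe) /= !big_cons big_nil mulr1.
rewrite hn !lognM ?prime_gt0 // !logn_prime // !eqxx (negbTE npq) eq_sym (negbTE npq).
by rewrite !expr1.
Qed.

Lemma L_setE (a : 'Z_n) :
  (a \in L_set n p') = (a \is a GRing.unit) && (redmod n q a \in Qset q).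
Proof.
rewrite /L_set inE; case ua: (a \is a GRing.unit) => //=.
have cop : coprime n a by rewrite -unitZpE // Zm_natE.
have np : ~~ (p' %| a)%N.
  by rewrite -prime_coprime //; apply: coprime_dvdl cop; rewrite hn dvdn_mulr.
have nq : ~~ (q %| a)%N.
  by rewrite -prime_coprime //; apply: coprime_dvdl cop; rewrite hn dvdn_mull.
rewrite jacobiE -legendre1P // /redmod.
have := legendre_nz np; move: (legendre a p') => l hl.
apply/eqP/eqP => [h|->]; last by rewrite mulr1.
have : l * (legendre a q - 1) = 0 by rewrite mulrBr mulr1 h subrr.
by move/eqP; rewrite mulf_eq0 (negbTE hl) subr_eq0 => /eqP.
Qed.

End LSet.

Definition wzt (R : comUnitRingType) (A : {pred R}) k (t : k.-tuple R) :=
  exists w : 'I_k -> R,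
  [/\ forall i, w i \in A \/ w i = 0, exists i, w i \in A &
      \sum_i w i * tnth t i = 0].

Lemma sum_ord_eq (R : comUnitRingType) n m (e : n = m) (F : nat -> R) :
  \sum_(i < n) F i = \sum_(i < m) F i.
Proof. by rewrite e. Qed.

Lemma wztP (R : comUnitRingType) (A : {pred R}) k (t : k.-tuple R) :
  has_wzs_subseq A t <-> wzt A t.
Proof.
split.
- case/wzseqP=> w [hw allw hasw sw]; exists (fun i => w`_i); split.
  + move=> i; have := all_nthP 0 allw; move/(_ i); rewrite hw size_tuple ltn_ord => /(_ isT).
    by rewrite /AZ => /orP [->|/eqP ->]; [left|right].
  + case/(has_nthP 0): hasw => i; rewrite hw size_tuple => hi hA.
    by exists (Ordinal hi).
  + transitivity (wsum w t); last exact: sw.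
    rewrite /wsum (sum_ord_eq (size_tuple t) (fun i => w`_i * t`_i)).
    by apply: eq_bigr => i _; rewrite (tnth_nth 0).
- case=> w [hw [i0 hi0] sw]; apply/wzseqP.
  exists [tuple w i | i < k]; split.
  + by rewrite !size_tuple.
  + apply/all_tnthP => i; rewrite tnth_mktuple /AZ.
    by case: (hw i) => [->|->]; rewrite ?eqxx ?orbT.
  + by apply/has_tnthP; exists i0; rewrite tnth_mktuple.
  + rewrite /wsum; transitivity (\sum_i w i * tnth t i); last exact: sw.
    rewrite (sum_ord_eq (size_tuple t) (fun i => _`_i * t`_i)).
    apply: eq_bigr => i _.
    by rewrite -(tnth_nth 0 [tuple w i | i < k] i) tnth_mktuple (tnth_nth 0).
Qed.

Lemma equiv_wzt (R : comUnitRingType) k (A : {pred R})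
  (Amul : forall x y, x \in A -> y \in A -> x * y \in A)
  (Ainv : forall x, x \in A -> x^-1 \in A)
  (Aunit : forall x, x \in A -> x \is a GRing.unit)
  (x y : k.-tuple R) : equiv_wrt A x y -> wzt A x -> wzt A y.
Proof.
case=> a [c [s [ha uc hy]]] [w [hw [i0 hi0] sw]].
exists (fun j => w (s^-1 j)%g * (a (s^-1 j)%g)^-1); split.
- move=> j; case: (hw (s^-1 j)%g) => [h|->]; last by right; rewrite mul0r.
  by left; apply: Amul => //; apply: Ainv.
- by exists (s i0); rewrite permK; apply: Amul => //; apply: Ainv.
- rewrite (reindex_inj (@perm_inj _ s)) /=.
  transitivity (c * \sum_i w i * tnth x i); last by rewrite sw mulr0.
  rewrite mulr_sumr; apply: eq_bigr => i _; rewrite permK hy.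
  transitivity (w i * ((a i)^-1 * a i) * (c * tnth x i)); first by ring.
  by rewrite mulVr ?Aunit // mulr1 mulrCA.
Qed.

Lemma sum3 (R : zmodType) (F : 'I_3 -> R) :
  \sum_i F i = F ord0 + F (inord 1) + F (inord 2).
Proof.
rewrite !big_ord_recl big_ord0 addr0 addrA; congr (_ + F _ + F _); apply: val_inj;
  by rewrite /= inordK.
Qed.

Lemma ord3_cases (i : 'I_3) : [\/ i = ord0, i = inord 1 | i = inord 2].
Proof.
case: i => [[|[|[|m]]] hi] //.
- by constructor 1; apply: val_inj.
- by constructor 2; apply: val_inj; rewrite /= inordK.
- by constructor 3; apply: val_inj; rewrite /= inordK.
Qed.

Lemma wz2 (q : nat) (a b wa wb : 'Z_q) :
  wa \in Qset q \/ wa = 0 -> wb \in Qset q \/ wb = 0 -> wa \in Qset q \/ wb \in Qset q ->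
  wa * a + wb * b = 0 -> has_wzs_subseq (Qset q) [:: a; b].
Proof.
move=> ha hb hab s0; apply/wzseqP; exists [:: wa; wb]; split => //.
- by rewrite /= /AZ; case: ha => [->|->]; case: hb => [->|->]; rewrite ?eqxx ?orbT.
- by rewrite /=; case: hab => ->; rewrite ?orbT.
- by rewrite !wsum_cons wsum_nil addr0.
Qed.

Section NoY.
Variables p' q n : nat.
Hypotheses (pp : prime p') (pq : prime q) (npq : p' != q) (hn : n = (p' * q)%N).

Let p1 : (1 < p')%N. Proof. exact: prime_gt1. Qed.
Let q1 : (1 < q)%N. Proof. exact: prime_gt1. Qed.
Let n1 : (1 < n)%N. Proof. by rewrite hn (leq_trans p1) // leq_pmulr // ltnW. Qed.
Let qn : (q %| n)%N. Proof. by rewrite hn dvdn_mull. Qed.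
Let pn : (p' %| n)%N. Proof. by rewrite hn dvdn_mulr. Qed.

Lemma A_red (a : 'Z_n) : a \in L_set n p' \/ a = 0 ->
  redmod n q a \in Qset q \/ redmod n q a = 0.
Proof.
case=> [|->]; last by right; rewrite red0.
by rewrite (L_setE pp pq npq hn) => /andP [_ h]; left.
Qed.

Lemma A_unit (a : 'Z_n) : a \in L_set n p' -> a \is a GRing.unit.
Proof. by rewrite (L_setE pp pq npq hn) => /andP []. Qed.

Lemma noY (Y : 3.-tuple 'Z_n) :
  ~ has_wzs_subseq (Qset q) [:: redmod n q (tnth Y (inord 1)); redmod n q (tnth Y (inord 2))] ->
  ((q %| tnth Y ord0)%N /\ tnth Y ord0 != 0) \/
  [/\ coprime p' (tnth Y ord0), (p' %| tnth Y (inord 1))%N & (p' %| tnth Y (inord 2))%N] ->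
  ~ wzt (L_set n p') Y.
Proof.
move=> nQ hc [w [hw [i0 hi0] sw]].
rewrite sum3 in sw.
set y1 := tnth Y ord0 in hc sw; set y2 := tnth Y (inord 1) in nQ hc sw;
set y3 := tnth Y (inord 2) in nQ hc sw.
set w0 := w ord0 in sw; set w1 := w (inord 1) in sw; set w2 := w (inord 2) in sw.
have modq : redmod n q w0 * redmod n q y1 + redmod n q w1 * redmod n q y2
          + redmod n q w2 * redmod n q y3 = 0.
  by have := congr1 (redmod n q) sw; rewrite !redD // !redM // red0.
have sub : w1 \in L_set n p' \/ w2 \in L_set n p' ->
           redmod n q w0 * redmod n q y1 = 0 -> False.
  move=> h12 h0; apply: nQ; apply: (wz2 (A_red (hw (inord 1))) (A_red (hw (inord 2)))).
  - case: h12 => h; [left|right]; by move: h; rewrite (L_setE pp pq npq hn) => /andP [].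
  - by move: modq; rewrite h0 add0r.
have notA0 : forall i, w i \notin L_set n p' -> w i = 0.
  by move=> i; case: (hw i) => [->|].
case: hc => [[qy1 y1n0]|[cy1 py2 py3]].
- have gy1 : redmod n q y1 = 0 by apply/eqP; rewrite red_eq0.
  case: (boolP (w1 \in L_set n p')) => h1; first by apply: (sub (or_introl h1)); rewrite gy1 mulr0.
  case: (boolP (w2 \in L_set n p')) => h2; first by apply: (sub (or_intror h2)); rewrite gy1 mulr0.
  have e1 := notA0 _ h1; have e2 := notA0 _ h2.
  have h0 : w0 \in L_set n p'.
    case: (ord3_cases i0) => ei; move: hi0; rewrite ei //.
    - by move=> h; move/negP: h1.
    - by move=> h; move/negP: h2.
  move: sw; rewrite /w1 /w2 e1 e2 !mul0r !addr0 => sw.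
  have : y1 = 0 by apply: (mulrI (A_unit h0)); rewrite sw mulr0.
  by move/eqP; rewrite (negbTE y1n0).
- have e0 : w0 = 0.
    apply: notA0; apply/negP => h0.
    have := congr1 (redmod n p') sw; rewrite !redD // !redM // red0 //.
    have -> : redmod n p' y2 = 0 by apply/eqP; rewrite red_eq0.
    have -> : redmod n p' y3 = 0 by apply/eqP; rewrite red_eq0.
    rewrite !mulr0 !addr0 => /eqP; rewrite Zp_mul_eq0 // => /orP [] h.
    + by have := red_unit n1 p1 pn (A_unit h0); rewrite (eqP h) unitr0.
    + by move: cy1; rewrite prime_coprime // -(red_eq0 p1 y1) h.
  apply: sub; last by rewrite e0 (red0 n1 q1 qn) mul0r.
  case: (ord3_cases i0) => ei; move: hi0; rewrite ei.
  + by rewrite -/w0 e0 => /A_unit; rewrite unitr0.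
  + by left.
  + by right.
Qed.

End NoY.

Definition crt a b (al : 'Z_a) (be : 'Z_b) : 'Z_(a * b) := (chinese a b al be)%:R.

Lemma crtE a b (al : 'Z_a) (be : 'Z_b) : (1 < a)%N -> (1 < b)%N -> coprime a b ->
  redmod (a * b) a (crt al be) = al /\ redmod (a * b) b (crt al be) = be.
Proof.
move=> a1 b1 cab; have m1 : (1 < a * b)%N by rewrite (leq_trans a1) // leq_pmulr // ltnW.
split.
- rewrite /crt red_nat ?dvdn_mulr // -Zp_nat_mod // chinese_modl // Zp_nat_mod //.
  exact: Zm_natE.
- rewrite /crt red_nat ?dvdn_mull // -Zp_nat_mod // chinese_modr // Zp_nat_mod //.
  exact: Zm_natE.
Qed.

Lemma unit_crt a b (x : 'Z_(a * b)) : (1 < a)%N -> (1 < b)%N ->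
  redmod (a * b) a x \is a GRing.unit -> redmod (a * b) b x \is a GRing.unit ->
  x \is a GRing.unit.
Proof.
move=> a1 b1; have m1 : (1 < a * b)%N by rewrite (leq_trans a1) // leq_pmulr // ltnW.
rewrite /redmod !unitZpE // => ca cb.
by rewrite -(Zm_natE x m1) unitZpE // coprimeMl ca cb.
Qed.

Section Upper.
Variables p' q : nat.
Hypotheses (pp : prime p') (pq : prime q) (npq : p' != q) (p4 : (4 < p')%N).
Variable t : 4.-tuple 'Z_(p' * q).
Hypothesis D3 : davenport_prop (Qset q) 3.

Let p1 : (1 < p')%N. Proof. exact: prime_gt1. Qed.
Let q1 : (1 < q)%N. Proof. exact: prime_gt1. Qed.
Let n1 : (1 < p' * q)%N. Proof. by rewrite (leq_trans p1) // leq_pmulr // ltnW. Qed.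
Let qn : (q %| p' * q)%N. Proof. by rewrite dvdn_mull. Qed.
Let pn : (p' %| p' * q)%N. Proof. by rewrite dvdn_mulr. Qed.
Let cpq : coprime p' q. Proof. by rewrite prime_coprime // dvdn_prime2 // npq. Qed.

Let u i := redmod (p' * q) p' (tnth t i).
Let v i := redmod (p' * q) q (tnth t i).
Let N := [set i | u i != 0].

Definition ZSq (T : {set 'I_4}) := exists be : 'I_4 -> 'Z_q,
  [/\ forall i, i \in T -> be i \in Qset q, forall i, i \notin T -> be i = 0 &
      \sum_i be i * v i = 0].

Definition ZSp (T : {set 'I_4}) := exists al : 'I_4 -> 'Z_p',
  [/\ forall i, i \in T -> al i \is a GRing.unit, forall i, i \notin T -> al i = 0 &
      \sum_i al i * u i = 0].

Lemma combine T : T != set0 -> ZSp T -> ZSq T -> wzt (L_set (p' * q) p') t.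
Proof.
move=> /set0Pn [i0 hi0] [al [al1 al0 als]] [be [be1 be0 bes]].
exists (fun i => crt (al i) (be i)); split.
- move=> i; case: (boolP (i \in T)) => hi.
  + left; rewrite (L_setE pp pq npq (erefl _)); have [e1 e2] := crtE (al i) (be i) p1 q1 cpq.
    apply/andP; split; last by rewrite e2 be1.
    by apply: unit_crt => //; rewrite ?e1 ?e2 ?al1 // Q_unit // be1.
  + right; apply/Zm_eq0_crt => //; have [e1 e2] := crtE (al i) (be i) p1 q1 cpq.
    by rewrite e1 e2 al0 ?be0.
- exists i0; rewrite (L_setE pp pq npq (erefl _)); have [e1 e2] := crtE (al i0) (be i0) p1 q1 cpq.
  apply/andP; split; last by rewrite e2 be1.
  by apply: unit_crt => //; rewrite ?e1 ?e2 ?al1 // Q_unit // be1.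
- apply/Zm_eq0_crt => //; rewrite !red_sum //; split.
  + transitivity (\sum_i al i * u i); last exact: als.
    apply: eq_bigr => i _; rewrite redM //.
    by have [-> _] := crtE (al i) (be i) p1 q1 cpq.
  + transitivity (\sum_i be i * v i); last exact: bes.
    apply: eq_bigr => i _; rewrite redM //.
    by have [_ ->] := crtE (al i) (be i) p1 q1 cpq.
Qed.

Lemma ZSp_ok T : #|T :&: N| != 1%N -> ZSp T.
Proof.
move=> hT.
case: (eqVneq (T :&: N) set0) => [M0 | /set0Pn [i0 hi0]].
  exists (fun i => if i \in T then 1 else 0); split.
  - by move=> i ->; rewrite unitr1.
  - by move=> i /negbTE ->.
  - apply: big1 => i _; case: ifP => hi; last by rewrite mul0r.
    have : i \notin T :&: N by rewrite M0 inE.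
    rewrite inE hi /= /N inE negbK => /eqP ->; by rewrite mulr0.
set M := T :&: N in hT hi0 *.
have hm : (1 < #|M| < 5)%N.
  have : (0 < #|M|)%N by apply/card_gt0P; exists i0.
  have : (#|M| <= 4)%N by have := max_card M; rewrite card_ord.
  by move: hT; case: #|M| => [|[|]].
set c : 'Z_p' := - ((#|M|.-1)%:R).
have uc : c \is a GRing.unit.
  rewrite unitrN unitZpE // prime_coprime //; apply/negP => hd.
  have h0 : (0 < #|M|.-1)%N by case/andP: hm => h1 _; lia.
  have := dvdn_leq h0 hd; move: hm p4; lia.
exists (fun i => if i \in T then (if i \in N then (if i == i0 then c * (u i)^-1 else (u i)^-1) else 1) else 0).
split.
- move=> i ->; case: ifP => hN; last by rewrite unitr1.
  have ui : u i \is a GRing.unit by rewrite Zp_unitE //; move: hN; rewrite inE.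
  by case: ifP => _; rewrite ?unitrM ?uc unitrV.
- by move=> i /negbTE ->.
- transitivity (\sum_i (if i \in M then (if i == i0 then c else 1) else 0)).
    apply: eq_bigr => i _; rewrite /M in_setI /N inE.
    case: (boolP (i \in T)) => hiT /=; last by rewrite mul0r.
    case: (boolP (u i != 0)) => hiN /=.
    + have ui : u i \is a GRing.unit by rewrite Zp_unitE.
      by case: ifP => _; rewrite ?divrK ?mulVr.
    + by move: hiN; rewrite negbK => /eqP ->; rewrite mulr0.
  rewrite -big_mkcond (bigD1 i0) //= eqxx.
  rewrite (eq_bigl (mem [predD1 M & i0])); last by move=> i; rewrite !inE andbC.
  rewrite (eq_bigr (fun=> 1)); last by move=> i /andP [/negbTE ->].
  rewrite sumr_const.
  have -> : #|[predD1 M & i0]| = #|M|.-1 by rewrite (cardD1 i0 M) hi0.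
  by rewrite /c addNr.
Qed.

Lemma sum2 (R : zmodType) (F : 'I_4 -> R) i j : i != j ->
  (forall k, k != i -> k != j -> F k = 0) -> \sum_k F k = F i + F j.
Proof.
move=> ij h; rewrite (bigD1 i) // (bigD1 j) /=; last by rewrite eq_sym.
rewrite big1 ?addr0 // => k /andP [ki kj]; exact: h.
Qed.

Lemma F1 i : v i = 0 -> ZSq [set i].
Proof.
move=> vi; exists (fun j => if j == i then 1 else 0); split.
- by move=> j; rewrite inE => ->; exact: Q1.
- by move=> j; rewrite inE => /negbTE ->.
- rewrite (bigD1 i) //= eqxx vi mulr0 add0r big1 // => j /negbTE ->; by rewrite mul0r.
Qed.

Lemma F1' i : ZSq [set i] -> v i = 0.
Proof.
case=> be [b1 b0 bs]; move: bs; rewrite (bigD1 i) //= big1 ?addr0.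
- move=> h; have ub := Q_unit (b1 i (set11 i)).
  by apply: (mulrI ub); rewrite h mulr0.
- by move=> j ji; rewrite b0 ?mul0r // inE.
Qed.

Lemma F2 (T1 T2 : {set 'I_4}) : (forall i, i \in T1 -> i \notin T2) -> ZSq T1 -> ZSq T2 -> ZSq (T1 :|: T2).
Proof.
move=> dis [b [b1 b0 bs]] [c [c1 c0 cs]]; exists (fun i => b i + c i); split.
- move=> i; rewrite inE; case/orP => hi.
  + by rewrite (c0 _ (dis _ hi)) addr0 b1.
  + have hb : i \notin T1 by apply/negP => /dis; rewrite hi.
    by rewrite (b0 _ hb) add0r c1.
- by move=> i; rewrite inE negb_or => /andP [h1 h2]; rewrite b0 // c0 // addr0.
- by under eq_bigr do rewrite mulrDl; rewrite big_split /= bs cs addr0.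
Qed.

Lemma F3 (X : {set 'I_4}) : (3 <= #|X|)%N -> exists T : {set 'I_4}, [/\ T \subset X, T != set0 & ZSq T].
Proof.
rewrite cardE; have := enum_uniq X; have := mem_enum X.
case: (enum X) => [|a [|b [|c r]]] //= mX.
move=> uq _.
have ab : a != b by apply/eqP=> e; move: uq; rewrite e /= inE eqxx.
have ac : a != c by apply/eqP=> e; move: uq; rewrite e /= !inE eqxx orbT.
have bc : b != c by apply/eqP=> e; move: uq; rewrite e /= !inE eqxx /=; case: (c == a); rewrite ?orbT //= andbF.
have /wzseqP [w [hw allw hasw sw]] := D3 (erefl : size [:: v a; v b; v c] = 3%N).
case: w hw allw hasw sw => [|b0 [|b1 [|b2 [|]]]] //= _.
rewrite !andbT => /and3P [h0 h1 h2] hasw.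
rewrite !wsum_cons wsum_nil /= addr0 addrA => sw.
pose be i := if i == a then b0 else if i == b then b1 else if i == c then b2 else 0.
have beb : be b = b1 by rewrite /be eq_sym (negbTE ab) eqxx.
have bec : be c = b2 by rewrite /be eq_sym (negbTE ac) eq_sym (negbTE bc) eqxx.
have bea : be a = b0 by rewrite /be eqxx.
exists [set i | be i \in Qset q]; split.
- apply/subsetP => i; rewrite in_set /be -!mX !in_cons.
  case: (i == a) => //; case: (i == b) => //; case: (i == c) => //.
  by move/(Q_neq0 pq); rewrite eqxx.
- move: hasw; rewrite orbF; case/or3P => h.
  + by apply/set0Pn; exists a; rewrite in_set bea.
  + by apply/set0Pn; exists b; rewrite in_set beb.
  + by apply/set0Pn; exists c; rewrite in_set bec.
- exists be; split.
  + by move=> i; rewrite inE.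
  + move=> i; rewrite inE /be.
    case: (i == a); first by move: h0; rewrite /AZ => /orP [->//|/eqP].
    case: (i == b); first by move: h1; rewrite /AZ => /orP [->//|/eqP].
    case: (i == c); first by move: h2; rewrite /AZ => /orP [->//|/eqP].
    done.
  + rewrite (bigD1 a) // (bigD1 b) /=; last by rewrite eq_sym.
    rewrite (bigD1 c) /=; last by rewrite !(eq_sym c) ac bc.
    rewrite big1 ?addr0; last first.
      move=> i /andP [/andP [ia ib] ic]; rewrite /be (negbTE ia) (negbTE ib) (negbTE ic).
      by rewrite mul0r.
    by rewrite bea beb bec addrA.
Qed.

Lemma F4 i j : i != j -> v i != 0 -> v j != 0 ->
  ZSq [set i; j] <-> - (v i * v j) \in Qset q.
Proof.
move=> ij vi vj; have uj : v j \is a GRing.unit by rewrite Zp_unitE.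
have ui : v i \is a GRing.unit by rewrite Zp_unitE.
split.
- case=> be [b1 b0 bs].
  move: bs; rewrite (sum2 ij); last by move=> k ki kj; rewrite b0 ?mul0r // !inE negb_or ki.
  move=> s.
  have e : be i * - (v i * v j) = be j * v j ^+ 2.
    apply/eqP; rewrite -subr_eq0.
    have -> : be i * - (v i * v j) - be j * v j ^+ 2 = - v j * (be i * v i + be j * v j) by ring.
    by rewrite s mulr0.
  apply: (Q_div (b1 i _)); first by rewrite !inE eqxx.
  by rewrite e QM // ?Q_sq // b1 // !inE eqxx orbT.
- move=> hr.
  exists (fun k => if k == i then - (v i * v j) else if k == j then v i ^+ 2 else 0); split.
  + move=> k /set2P [] ->; rewrite ?eqxx //.
    by rewrite eq_sym (negbTE ij) Q_sq.
  + by move=> k; rewrite !inE negb_or => /andP [/negbTE -> /negbTE ->].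
  + rewrite (sum2 ij); last by move=> k /negbTE -> /negbTE ->; rewrite mul0r.
    by rewrite eqxx eq_sym (negbTE ij) eqxx; ring.
Qed.

Definition Good (T : {set 'I_4}) := [/\ T != set0, ZSq T & #|T :&: N| != 1%N].

Lemma good2 (T : {set 'I_4}) a b : a != b -> a \in T -> b \in T -> a \in N -> b \in N ->
  #|T :&: N| != 1%N.
Proof.
move=> ab aT bT aN bN; apply/negP => /eqP h1.
have : (1 < #|T :&: N|)%N by apply/card_gt1P; exists a, b; rewrite !in_setI aT bT aN bN.
by rewrite h1.
Qed.

Lemma good0 (T : {set 'I_4}) : (forall i, i \in T -> i \notin N) -> #|T :&: N| != 1%N.
Proof.
move=> h; suff -> : T :&: N = set0 by rewrite cards0.
apply/setP => i; rewrite in_setI in_set0; case: (boolP (i \in T)) => // hi.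
exact: negbTE (h _ hi).
Qed.

Lemma sub2 (T : {set 'I_4}) y z : (forall i, i \in T -> i = y \/ i = z) -> (1 < #|T|)%N ->
  T = [set y; z].
Proof.
move=> h c; apply/eqP; rewrite eqEcard; apply/andP; split.
- by apply/subsetP => i /h [] ->; rewrite !inE eqxx ?orbT.
- by rewrite cards2; apply: leq_trans c; case: (y != z).
Qed.

Lemma ZSq_pair x y : x != y -> v x = 0 -> v y = 0 -> ZSq [set x; y].
Proof.
move=> xy vx vy; apply: F2; last 2 first; [exact: F1 | exact: F1 |].
by move=> k /set1P ->; rewrite inE.
Qed.

Lemma exists_good : exists T, Good T.
Proof.
case: (pickP (fun i => (u i == 0) && (v i == 0))) => [i /andP [ui vi] | H0].
  exists [set i]; split.
  - by apply/set0Pn; exists i; rewrite set11.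
  - exact: F1 (eqP vi).
  - by apply: good0 => j /set1P ->; rewrite inE negbK.
have vN : forall i, v i = 0 -> i \in N.
  by move=> i vi; rewrite inE; move: (H0 i) => /=; rewrite vi eqxx andbT => ->.
set Zv := [set i | v i == 0].
case: (ltngtP #|Zv| 1) => hZ; last first.
-
  case/cards1P: (introT eqP hZ) => i hi.
  have vi : v i = 0 by apply/eqP; move: (set11 i); rewrite -hi inE.
  have c3 : (3 <= #|[set~ i]|)%N by rewrite cardsC1 card_ord.
  case: (F3 c3) => T2 [sub ne zs].
  case: (eqVneq #|T2 :&: N| 1%N) => h; last by exists T2.
  case/cards1P: (introT eqP h) => j hj.
  have jT : j \in T2 by have := set11 j; rewrite -hj in_setI => /andP [].
  have jN : j \in N by have := set11 j; rewrite -hj in_setI => /andP [].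
  have ji : j != i by move: (subsetP sub j jT); rewrite in_setC1.
  exists ([set i] :|: T2); split.
  + by apply/set0Pn; exists i; rewrite !inE eqxx.
  + apply: F2 => //; last exact: F1.
    move=> k /set1P ->; apply/negP => /(subsetP sub); by rewrite in_setC1 eqxx.
  + apply: (good2 (a := i) (b := j)).
    * by rewrite eq_sym.
    * by rewrite !inE eqxx.
    * by rewrite in_setU jT orbT.
    * exact: vN.
    * exact: jN.
-
  case/card_gt1P: hZ => i [j [iZ jZ ij]].
  move: iZ jZ; rewrite !inE => /eqP vi /eqP vj.
  exists [set i; j]; split.
  + by apply/set0Pn; exists i; rewrite !inE eqxx.
  + exact: ZSq_pair.
  + by apply: (good2 ij); rewrite ?vN // !inE eqxx ?orbT.
have vnz : forall i, v i != 0.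
  move=> i; apply/negP => vi.
  have : (0 < #|Zv|)%N by apply/card_gt0P; exists i; rewrite inE.
  by rewrite lt0n; move: hZ; case: #|Zv|.
have big : forall T, T != set0 -> ZSq T -> (1 < #|T|)%N.
  move=> T ne zs; rewrite ltnNge; apply/negP => c1.
  have : #|T| == 1%N by rewrite eqn_leq c1 lt0n cards_eq0.
  case/cards1P => i hi; move: zs; rewrite hi => /F1' vi.
  by move: (vnz i); rewrite vi eqxx.
have cN := cardsC N; rewrite card_ord in cN.
case: (ltngtP #|N| 2) => hN.
- have c3 : (3 <= #|~: N|)%N by lia.
  case: (F3 c3) => T [sub ne zs]; exists T; split => //.
  by apply: good0 => i /(subsetP sub); rewrite in_setC.
- have c3 : (3 <= #|N|)%N by lia.
  case: (F3 c3) => T [sub ne zs]; exists T; split => //.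
  case/card_gt1P: (big _ ne zs) => a [b [aT bT ab]].
  by apply: (good2 ab) => //; apply: (subsetP sub).
- case/cards2P: (introT eqP hN) => a [b [ab hab]].
  have : #|~: N| == 2%N by apply/eqP; lia.
  case/cards2P => c [d [cd hcd]].
  have aN : a \in N by rewrite hab !inE eqxx.
  have bN : b \in N by rewrite hab !inE eqxx orbT.
  have cN' : c \notin N by rewrite -in_setC hcd !inE eqxx.
  have dN : d \notin N by rewrite -in_setC hcd !inE eqxx orbT.
  have neqNN : forall x y, x \in N -> y \notin N -> x != y.
    by move=> x y xN yN; apply/eqP => e; move: yN; rewrite -e xN.
  have pairU : forall x y z w, x \in N -> y \in N -> z \notin N -> w \notin N ->
      x != y -> z != w -> ZSq [set x; z] -> ZSq [set y; w] -> exists T, Good T.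
    move=> x y z w xN yN zN wN xy zw h1 h2.
    exists ([set x; z] :|: [set y; w]); split.
    + by apply/set0Pn; exists x; rewrite !inE eqxx.
    + apply: F2 => // k /set2P [] ->; rewrite !inE negb_or.
      * by rewrite xy neqNN.
      * by rewrite zw andbT; apply/eqP => e; move: zN; rewrite e yN.
    + by apply: (good2 xy) => //; rewrite !inE eqxx ?orbT.
  have pairN : forall x y, x \in N -> y \in N -> x != y -> ZSq [set x; y] ->
      exists T, Good T.
    move=> x y xN yN xy h; exists [set x; y]; split => //.
    + by apply/set0Pn; exists x; rewrite !inE eqxx.
    + by apply: (good2 xy) => //; rewrite !inE eqxx ?orbT.
  case: (boolP (- (v c * v d) \in Qset q)) => hq.
    exists [set c; d]; split.
    + by apply/set0Pn; exists c; rewrite !inE eqxx.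
    + by apply/(F4 cd (vnz c) (vnz d)).
    + by apply: good0 => i /set2P [] ->.
  have keyc : forall x y, x \in N -> y \in N -> x != y ->
      ZSq [set x; c] -> ZSq [set x; d] -> exists T, Good T.
    move=> x y xN yN xy hc hd.
    move/(F4 (neqNN _ _ xN cN') (vnz x) (vnz c)): hc => hc.
    move/(F4 (neqNN _ _ xN dN) (vnz x) (vnz d)): hd => hd.
    case: (keyQ pq (vnz x) (vnz y) (vnz c) hc hd hq) => h.
    + apply: (pairU y x c d) => //; first by rewrite eq_sym.
      * by apply/(F4 (neqNN _ _ yN cN') (vnz y) (vnz c)).
      * by apply/(F4 (neqNN _ _ xN dN) (vnz x) (vnz d)).
    + by apply: (pairN x y) => //; apply/(F4 xy (vnz x) (vnz y)).
  have step : forall e, e \notin N -> (exists T, Good T) \/ ZSq [set a; e] \/ ZSq [set b; e].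
    move=> e eN.
    have c3 : (3 <= #|[set a; b; e]|)%N.
      apply/card_gt2P; exists a, b, e; split; first by rewrite !inE !eqxx ?orbT.
      by split => //; [apply: neqNN | rewrite eq_sym; apply: neqNN].
    case: (F3 c3) => T1 [sub ne zs]; have c2 := big _ ne zs.
    have memT : forall i, i \in T1 -> [\/ i = a, i = b | i = e].
      move=> i /(subsetP sub); rewrite !inE -orbA => /or3P [] /eqP ->.
      - by constructor 1.
      - by constructor 2.
      - by constructor 3.
    case: (boolP (a \in T1)) => aT; case: (boolP (b \in T1)) => bT.
    + by left; exists T1; split => //; apply: (good2 ab).
    + right; left.
      have <- // : T1 = [set a; e].
      apply: sub2 c2 => i iT; case: (memT i iT) => ei; [by left| |by right].
      by move: iT; rewrite ei (negbTE bT).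
    + right; right.
      have <- // : T1 = [set b; e].
      apply: sub2 c2 => i iT; case: (memT i iT) => ei; [|by left|by right].
      by move: iT; rewrite ei (negbTE aT).
    + exfalso.
      have sub1 : T1 \subset [set e].
        apply/subsetP => i iT; case: (memT i iT) => ei.
        - by move: iT; rewrite ei (negbTE aT).
        - by move: iT; rewrite ei (negbTE bT).
        - by rewrite ei set11.
      by have := subset_leq_card sub1; rewrite cards1 leqNgt c2.
  case: (step c cN') => [//|[hac|hbc]]; case: (step d dN) => [//|[had|hbd]].
  + exact: (keyc a b).
  + exact: (pairU a b c d).
  + by apply: (pairU b a c d) => //; rewrite eq_sym.
  + by apply: (keyc b a) => //; rewrite eq_sym.
Qed.

Lemma upper_wzt : wzt (L_set (p' * q) p') t.
Proof.
case: exists_good => T [ne zs hT].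
exact: (combine ne (ZSp_ok hT) zs).
Qed.

End Upper.

Local Close Scope ring_scope.

Theorem theorem5p6 (p' q n : nat) :
  prime p' -> prime q -> p' != q -> 7 <= p' -> 7 <= q -> n = p' * q ->
  forall S : 3.-tuple 'Z_n,
  (exists Y : 3.-tuple 'Z_n,
     equiv_wrt (L_set n p') S Y /\
     let y1 := tnth Y ord0 in
     let y2 := tnth Y (inord 1) in
     let y3 := tnth Y (inord 2) in
     ([/\ q %| y1, ~~ (q %| y2), ~~ (q %| y3), y1 != 0%R &
          extremal (Qset q) [:: redmod n q y2; redmod n q y3]]
      \/
      [/\ coprime p' y1, ~~ coprime p' y2, ~~ coprime p' y3 &
          extremal (Qset q) [:: redmod n q y2; redmod n q y3]])) ->
  extremal (L_set n p') S.
Proof.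
move=> pp pq npq p7 q7 hn S [Y [eqv hY]]; subst n.
have p1 : (1 < p')%N by apply: prime_gt1.
have q1 : (1 < q)%N by apply: prime_gt1.
have n1 : (1 < p' * q)%N by rewrite (leq_trans p1) // leq_pmulr // ltnW.
have [hQ hc] : extremal (Qset q) [:: redmod (p' * q) q (tnth Y (inord 1));
                                   redmod (p' * q) q (tnth Y (inord 2))] /\
  (((q %| tnth Y ord0)%N /\ tnth Y ord0 != 0%R) \/
  [/\ coprime p' (tnth Y ord0), (p' %| tnth Y (inord 1))%N & (p' %| tnth Y (inord 2))%N]).
  case: hY => [[h1 h2 h3 h4 h5]|[h1 h2 h3 h5]]; split => //; first by left.
  by right; split => //; [move: h2 | move: h3]; rewrite prime_coprime // negbK.
case: hQ => k [[dk mink] sk nQ].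
have k3 : k = 3%N by move: sk => /=; case: k {dk mink} => [|[|[|[|]]]].
subst k.
pose A := L_set (p' * q) p'.
have Amul : forall x y, x \in A -> y \in A -> (x * y)%R \in A.
  move=> x y; rewrite /A !(L_setE pp pq npq (erefl _)) => /andP [ux qx] /andP [uy qy].
  by rewrite unitrM ux uy redM ?dvdn_mull // QM.
have Ainv : forall x, x \in A -> (x^-1)%R \in A.
  move=> x; rewrite /A !(L_setE pp pq npq (erefl _)) => /andP [ux qx].
  rewrite unitrV ux /=; apply: (Q_div qx).
  by rewrite -redM ?dvdn_mull // mulrV // red1 ?dvdn_mull // Q1.
have Aunit : forall x, x \in A -> x \is a GRing.unit.
  by move=> x; rewrite /A (L_setE pp pq npq (erefl _)) => /andP [].
have noS : ~ has_wzs_subseq A S.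
  move/wztP => hS; apply: (noY pp pq npq (erefl _) nQ hc).
  exact: (equiv_wzt Amul Ainv Aunit eqv hS).
exists 4%N; split => //; last by rewrite size_tuple.
split.
- move=> s hs; have hs' : size s == 4%N by apply/eqP.
  apply: (proj2 (wztP A (Tuple hs'))).
  apply: upper_wzt => //; lia.
- move=> j hj hd; apply: noS.
  have := hd (take j S) (size_takel (_ : j <= size S)%N).
  case; first by rewrite size_tuple; lia.
  move=> t [st ne z]; exists t; split => //.
  exact: subseq_trans st (take_subseq _ _).
Qed.
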